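(* Let $\boldsymbol{G}$ be a $k\times n$ binary generator matrix of full rank $k$ of a binary $(n,k)$ linear block code $\mathcal{C}$, and let $\boldsymbol{b}^{(1)},\dots,\boldsymbol{b}^{(2^k)}$ be an enumeration of all of $\{0,1\}^k$, with $\boldsymbol{c}^{(j)}=\boldsymbol{b}^{(j)}\boldsymbol{G}$ (over $\mathrm{GF}(2)$), so $\mathcal{C}=\{\boldsymbol{c}^{(1)},\dots,\boldsymbol{c}^{(2^k)}\}$. Let $\sigma^2>0$ be the channel noise variance. Consider a three-layer neural network (no biases) with $n$ input neurons, $2^k$ hidden neurons and $k$ output neurons, where: (i) the $n\times 2^k$ binary weight matrix $\boldsymbol{W}^{(1)}$ from input to hidden layer has $j$-th column $\boldsymbol{c}^{(j)}$; (ii) the hidden layer applies the scaled softmax activation with scaling factor $\alpha=2/\sigma^2$, i.e. given pre-activations $x_1,\dots,x_{2^k}$ it outputs $h_j=\exp(\alpha x_j)/\sum_{l=1}^{2^k}\exp(\alpha x_l)$; (iii) the $2^k\times k$ binary weight matrix $\boldsymbol{W}^{(2)}$ from hidden to output layer has $j$-th row $\boldsymbol{b}^{(j)}$, and the output neurons compute $\boldsymbol{h}\boldsymbol{W}^{(2)}$; (iv) the decision on the $i$-th information bit is obtained by thresholding the $i$-th output at $1/2$: $\hat b_i=1$ if the output exceeds $1/2$ and $\hat b_i=0$ if it is below $1/2$. Then, for a received vector $\boldsymbol{r}\in\mathbb{R}^n$ (row vector, input as $\boldsymbol{r}\boldsymbol{W}^{(1)}$ to the hidden layer), this network realizes bit-wise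 maximum likelihood (equivalently, under the uniform prior, bit-wise maximum a posteriori) decoding of the information bits, i.e. $\hat b_i\in\mathop{\mathrm{argmax}}_{b\in\{0,1\}} P(b_i=b\mid\boldsymbol{r})$ for each $i=1,\dots,k$. No training is required.
   Context: Transmission model: the information vector $\boldsymbol{b}=(b_1,\dots,b_k)$ has i.i.d. uniform bits and is encoded to $\boldsymbol{c}=\boldsymbol{b}\boldsymbol{G}$; the code bits are mapped to BPSK symbols $s_i=2c_i-1\in\{-1,1\}$ and sent over a binary-input additive white Gaussian noise channel: the receiver observes $\boldsymbol{r}=\boldsymbol{s}+\boldsymbol{w}$ with $w_1,\dots,w_n$ i.i.d. zero-mean Gaussian of variance $\sigma^2$, so $p(\boldsymbol{r}\mid\boldsymbol{c})=\prod_{i=1}^n \frac{1}{\sqrt{2\pi\sigma^2}}\exp\!\big(-\frac{(r_i-(2c_i-1))^2}{2\sigma^2}\big)$. Bit-wise MAP/ML decoding chooses, for each bit position $i$, the value $b\in\{0,1\}$ maximizing the posterior probability $P(b_i=b\mid\boldsymbol{r})$ (equivalently the likelihood $p(\boldsymbol{r}\mid b_i=b)$, since bits are uniform); ties may be broken arbitrarily. *)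

(* Defs.v *)
From HB Require Import structures.
From mathcomp Require Import all_boot all_order all_algebra.
From mathcomp Require Import all_classical all_reals all_analysis.
Set Implicit Arguments. Unset Strict Implicit. Unset Printing Implicit Defensive.
Import Order.TTheory GRing.Theory Num.Theory.
Local Open Scope ring_scope.

Section Defs.
Variable R : realType.

Definition bitR (x : 'F_2) : R := if x == 0 then 0 else 1.

Definition bpsk (x : 'F_2) : R := 2 * bitR x - 1.

Definition awgn_lik n (s2 : R) (r : 'rV[R]_n) (c : 'rV['F_2]_n) : R :=
  \prod_(l < n) ((Num.sqrt (2 * pi * s2))^-1 *
                 expR (- (r 0 l - bpsk (c 0 l)) ^+ 2 / (2 * s2))).

(* posterior P(b_i = b | r) under uniform prior 2^-k on information words,
   codeword c = b G, by Bayes' rule *)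
Definition posterior_bit n k (s2 : R) (G : 'M['F_2]_(k, n)) (r : 'rV[R]_n)
  (i : 'I_k) (b : 'F_2) : R :=
  (\sum_(u : 'rV['F_2]_k | u 0 i == b) ((2 ^ k)%:R^-1 * awgn_lik s2 r (u *m G)))
  / (\sum_(u : 'rV['F_2]_k) ((2 ^ k)%:R^-1 * awgn_lik s2 r (u *m G))).

(* the network: e enumerates {0,1}^k as b^(1), ..., b^(2^k) *)
Definition W1 n k (e : 'I_(2 ^ k) -> 'rV['F_2]_k) (G : 'M['F_2]_(k, n))
  : 'M[R]_(n, 2 ^ k) := \matrix_(l, j) bitR ((e j *m G) 0 l).

Definition W2 k (e : 'I_(2 ^ k) -> 'rV['F_2]_k) : 'M[R]_(2 ^ k, k) :=
  \matrix_(j, i) bitR (e j 0 i).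

Definition scaled_softmax m (alpha : R) (x : 'rV[R]_m) : 'rV[R]_m :=
  \row_j (expR (alpha * x 0 j) / \sum_(l < m) expR (alpha * x 0 l)).

Definition nn_output n k (s2 : R) (e : 'I_(2 ^ k) -> 'rV['F_2]_k)
  (G : 'M['F_2]_(k, n)) (r : 'rV[R]_n) : 'rV[R]_k :=
  scaled_softmax (2 / s2) (r *m W1 e G) *m W2 e.

End Defs.

(* Main.v *)
Require Import Defs.
From HB Require Import structures.
From mathcomp Require Import all_boot all_order all_algebra.
From mathcomp Require Import all_classical all_reals all_analysis.
From mathcomp Require Import ring lra.
Import Order.TTheory GRing.Theory Num.Theory.
Local Open Scope ring_scope.
Lemma F2_cases (x : 'F_2) : x = 0 \/ x = 1.
Proof. case: x => [[|[|m]] Hm]; [left|right|by []]; exact/val_inj. Qed.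

Section S.
Variables (R : realType) (n : nat) (s2 : R) (r : 'rV[R]_n).
Hypothesis hs2 : 0 < s2.

Definition Kc : R := \prod_(l < n) ((Num.sqrt (2 * pi * s2))^-1 *
                 expR (- (r 0 l + 1) ^+ 2 / (2 * s2))).

Lemma Kc_gt0 : 0 < Kc.
Proof.
apply: prodr_gt0 => l _; apply: mulr_gt0; last exact: expR_gt0.
rewrite invr_gt0 sqrtr_gt0; apply: mulr_gt0 => //; apply: mulr_gt0 => //.
exact: pi_gt0.
Qed.

Lemma lik_factor (c : 'rV['F_2]_n) :
  awgn_lik s2 r c = Kc * expR (2 / s2 * \sum_(l < n) r 0 l * bitR R (c 0 l)).
Proof.
rewrite /awgn_lik /Kc mulr_sumr expR_sum -big_split /=.
apply: eq_bigr => l _; rewrite [RHS]mulrC [RHS]mulrCA. rewrite -expRD; congr (_ * expR _).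
rewrite /bpsk /bitR; have s2n : s2 != 0 by rewrite gt_eqF.
case: (F2_cases (c 0 l)) => ->; rewrite ?eqxx /=.
  by field.
by field.
Qed.
End S.

Theorem theorem2 (R : realType) (n k : nat) (G : 'M['F_2]_(k, n))
  (hrank : \rank G = k)
  (e : 'I_(2 ^ k) -> 'rV['F_2]_k) (he : bijective e)
  (s2 : R) (hs2 : 0 < s2) (r : 'rV[R]_n) (i : 'I_k) (bhat : 'F_2) :
  (1 / 2 < nn_output s2 e G r 0 i -> bhat = 1) ->
  (nn_output s2 e G r 0 i < 1 / 2 -> bhat = 0) ->
  forall b : 'F_2, posterior_bit s2 G r i b <= posterior_bit s2 G r i bhat.
Proof.
move=> H1 H0 b.
pose E (u : 'rV['F_2]_k) := expR (2 / s2 * \sum_(l < n) r 0 l * bitR R ((u *m G) 0 l)).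
have Egt0 u : 0 < E u by exact: expR_gt0.
pose A (c : 'F_2) := \sum_(u : 'rV['F_2]_k | u 0 i == c) E u.
pose T := \sum_(u : 'rV['F_2]_k) E u.
have A_ge0 c : 0 <= A c by apply: sumr_ge0 => u _; exact: ltW.
have TA : T = A 0 + A 1.
  rewrite /T (bigID (fun u : 'rV['F_2]_k => u 0 i == 1)) /= addrC; congr (_ + _).
  apply: eq_bigl => u; case: (F2_cases (u 0 i)) => -> //.
have Tgt0 : 0 < T.
  rewrite /T (bigD1 0) //=; apply: ltr_pwDl; first exact: Egt0.
  by apply: sumr_ge0 => u _; exact: ltW.
have post c : posterior_bit s2 G r i c = A c / T.
  rewrite /posterior_bit.
  rewrite (eq_bigr (fun u => (2 ^ k)%:R^-1 * (@Kc R n s2 r * E u))); last by move=> u _; rewrite lik_factor.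
  rewrite [X in _ / X](eq_bigr (fun u => (2 ^ k)%:R^-1 * (@Kc R n s2 r * E u))); last by move=> u _; rewrite lik_factor.
  rewrite -!mulr_sumr.
  have c0 : (2 ^ k)%:R != 0 :> R by rewrite pnatr_eq0 expn_eq0.
  have K0 : @Kc R n s2 r != 0 by rewrite gt_eqF // Kc_gt0.
  have T0 : T != 0 by rewrite gt_eqF.
  rewrite -/(A c) -/T; field; by rewrite T0 c0 K0.
have out : nn_output s2 e G r 0 i = A 1 / T.
  rewrite /nn_output mxE.
  have hW' j : expR (2 / s2 * \sum_l r 0 l * W1 R e G l j) = E (e j).
    rewrite /E; congr (expR (_ * _)); apply: eq_bigr => l _; by rewrite mxE.
  have hW j : expR (2 / s2 * (r *m W1 R e G) 0 j) = E (e j) by rewrite mxE hW'.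
  transitivity ((\sum_j E (e j) * bitR R (e j 0 i)) / \sum_l E (e l)).
    rewrite mulr_suml; apply: eq_bigr => j _; rewrite !mxE hW' mulrAC; congr (_ * _ / _).
    by apply: eq_bigr => l _; rewrite hW.
  have bij : {on [pred u | true], bijective e} by exact: onW_bij.
  rewrite /T /A.
  rewrite -(reindex e (P := fun _ => true) (F := fun u => E u * bitR R (u 0 i)) bij).
  rewrite -(reindex e (P := fun _ => true) (F := E) bij).
  congr (_ / _); rewrite [RHS]big_mkcond /=; apply: eq_bigr => u _.
  by rewrite /bitR; case: (F2_cases (u 0 i)) => ->; rewrite /= ?mulr0 ?mulr1.
rewrite !post.
have Tinv : 0 < T^-1 by rewrite invr_gt0.
rewrite ler_pM2r //.
case: (ltgtP (A 0) (A 1)) => h.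
- rewrite H1; last by rewrite out ltr_pdivlMr // TA; lra.
  by case: (F2_cases b) => ->; rewrite ?lexx // ltW.
- rewrite H0; last by rewrite out ltr_pdivrMr // TA; lra.
  by case: (F2_cases b) => ->; rewrite ?lexx // ltW.
- by case: (F2_cases b) => ->; case: (F2_cases bhat) => ->; rewrite ?h.
Qed.
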